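(* Let $\mathbb{K}$ be a field of characteristic zero, let $\mathfrak{g}=(V,\mu)$ be a non-perfect Lie algebra over $\mathbb{K}$ with $\dim V=n$, and let $t\in\mathbb{K}\setminus\{0,1\}$. Then $$\dim\Omega(\mathfrak{g})\leq \widehat{\phi}_{n,t}(\mathfrak{g})\leq \dim\Omega(\mathfrak{g})+\dim L\big(\mathfrak{g}^{(2)};\mathcal{Z}(\mathfrak{g})\cap\mathfrak{g}^{(2)}\big).$$
   Context: $\mathfrak{g}^{(2)}$ is the linear span of all products $\mu(X,Y)$; non-perfect means $\mathfrak{g}^{(2)}\neq\mathfrak{g}$. $\mathcal{Z}(\mathfrak{g})=\{X:\mu(X,Y)=0\ \forall Y\}$ is the center. $L(U;W)$ is the space of linear maps $U\to W$. $\Omega(\mathfrak{g})=\{T\in L(V;V): \operatorname{Im}T\subseteq\mathcal{Z}(\mathfrak{g}),\ \mathfrak{g}^{(2)}\subseteq\operatorname{Ker}T\}$. $\widehat{\phi}_{n,t}(\mathfrak{g})=\dim\mathcal{D}(t,1,0)(\mathfrak{g})$, where $\mathcal{D}(t,1,0)(\mathfrak{g})$ is the space of linear maps $D:V\to V$ with $tD\mu(X,Y)=\mu(DX,Y)$ for all $X,Y\in V$. *)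

(* Defs.v *)
From HB Require Import structures.
From mathcomp Require Import all_boot all_order all_algebra.
From Stdlib Require Import ClassicalEpsilon.
Set Implicit Arguments. Unset Strict Implicit. Unset Printing Implicit Defensive.
Import GRing.Theory.
Local Open Scope ring_scope.


Section Defs.
Variables (K : fieldType) (V : vectType K).

(* The subspace of a finite-dimensional space vT whose elements are exactly
   those satisfying P (chosen by classical choice; meaningful when P is a
   linear subspace, which is the case for all uses below). *)
Definition vspace_of (vT : vectType K) (P : vT -> Prop) : {vspace vT} :=
  epsilon (inhabits 0%VS) (fun U : {vspace vT} => forall v, v \in U <-> P v).

Definition is_lie_bracket (mu : V -> V -> V) : Prop :=
  [/\ (forall (a : K) x y z, mu (a *: x + y)%R z = (a *: mu x z + mu y z)%R),
      (forall (a : K) x y z, mu x (a *: y + z)%R = (a *: mu x y + mu x z)%R),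
      (forall x, mu x x = 0) &
      (forall x y z, mu x (mu y z) + mu y (mu z x) + mu z (mu x y) = 0)].

Definition derived (mu : V -> V -> V) : {vspace V} :=
  vspace_of (fun v : V => forall W : {vspace V},
                 (forall X Y, mu X Y \in W) -> v \in W).

Definition center (mu : V -> V -> V) : {vspace V} :=
  vspace_of (fun X : V => forall Y, mu X Y = 0).

Definition Omega (mu : V -> V -> V) : {vspace 'End(V)} :=
  vspace_of (fun T : 'End(V) =>
    (forall X, T X \in center mu) /\ (forall X, X \in derived mu -> T X = 0)).

Definition Dt10 (mu : V -> V -> V) (t : K) : {vspace 'End(V)} :=
  vspace_of (fun D : 'End(V) => forall X Y, t *: D (mu X Y) = mu (D X) Y).

Definition phi_hat (mu : V -> V -> V) (t : K) : nat := \dim (Dt10 mu t).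

Definition dimL_derived_center (mu : V -> V -> V) : nat :=
  \dim (fullv : {vspace 'Hom(subvs_of (derived mu),
                              subvs_of (center mu :&: derived mu)%VS)}).

End Defs.

(* Main.v *)
Require Import Defs.
From HB Require Import structures.
From mathcomp Require Import all_boot all_order all_algebra.
From mathcomp Require Import zify.
From Stdlib Require Import ClassicalEpsilon Classical.
Import GRing.Theory.
Local Open Scope ring_scope.

Section Aux.
Variables (K : fieldType).

Lemma vspace_ofP (vT : vectType K) (P : vT -> Prop) :
  P 0 -> (forall a u v, P u -> P v -> P (a *: u + v)) ->
  forall v, v \in vspace_of P <-> P v.
Proof.
move=> P0 PC.
have PD : forall u v, P u -> P v -> P (u + v).
  by move=> u v Pu Pv; have := PC 1 u v Pu Pv; rewrite scale1r.
have PZ : forall a u, P u -> P (a *: u).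
  by move=> a u Pu; have := PC a u 0 Pu P0; rewrite addr0.
suff [W HW] : exists W : {vspace vT}, forall v, v \in W <-> P v.
  rewrite /vspace_of; apply: (epsilon_spec (inhabits 0%VS)
    (fun U : {vspace vT} => forall v, v \in U <-> P v)); by exists W.
suff H : forall k (U : {vspace vT}), (forall u, u \in U -> P u) ->
   (\dim (fullv : {vspace vT}) - \dim U <= k)%N ->
   exists W : {vspace vT}, forall v, v \in W <-> P v.
  apply: (H _ 0%VS) => //; by move=> u; rewrite memv0 => /eqP ->.
elim=> [|k IH] U HU Hk.
  exists U => v; split; first exact: HU.
  move=> Pv; apply: contraT => vU.
  have : (\dim U < \dim (U + <[v]>))%N.
    rewrite (ltn_leqif (dimv_leqif_sup (addvSl U <[v]>))).
    apply/negP => /subvP /(_ v (subvP (addvSr U <[v]>) v (memv_line v))); by rewrite (negbTE vU).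
  have := dimvS (subvf (U + <[v]>)); lia.
case: (classic (forall v, P v -> v \in U)) => [HP|].
  by exists U => v; split; [exact: HU | exact: HP].
move=> /not_all_ex_not [v Hv].
have [Pv /negP vU] := imply_to_and _ _ Hv.
apply: (IH (U + <[v]>)%VS).
  move=> w /memv_addP [u uU [x /vlineP [a ->] ->]].
  by rewrite addrC; apply: PC => //; apply: HU.
have : (\dim U < \dim (U + <[v]>))%N.
  rewrite (ltn_leqif (dimv_leqif_sup (addvSl U <[v]>))).
  apply/negP => /subvP /(_ v (subvP (addvSr U <[v]>) v (memv_line v))); by rewrite (negbTE vU).
have := dimvS (subvf (U + <[v]>)); lia.
Qed.

Section Lie.
Variables (V : vectType K) (mu : V -> V -> V).
Hypothesis Hmu : is_lie_bracket mu.

Lemma muDZl a x y z : mu (a *: x + y) z = a *: mu x z + mu y z.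
Proof. by case: Hmu. Qed.
Lemma muDZr a x y z : mu x (a *: y + z) = a *: mu x y + mu x z.
Proof. by case: Hmu. Qed.
Lemma mu0l z : mu 0 z = 0.
Proof. by have := muDZl (-1) 0 0 z; rewrite scaler0 addr0 scaleN1r addNr. Qed.
Lemma mu0r z : mu z 0 = 0.
Proof. by have := muDZr (-1) z 0 0; rewrite scaler0 addr0 scaleN1r addNr. Qed.
Lemma muDl x y z : mu (x + y) z = mu x z + mu y z.
Proof. by have := muDZl 1 x y z; rewrite !scale1r. Qed.
Lemma muZl a x z : mu (a *: x) z = a *: mu x z.
Proof. by have := muDZl a x 0 z; rewrite addr0 mu0l addr0. Qed.
Lemma muZr a x z : mu z (a *: x) = a *: mu z x.
Proof. by have := muDZr a z x 0; rewrite addr0 mu0r addr0. Qed.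
Lemma muDr x y z : mu z (x + y) = mu z x + mu z y.
Proof. by have := muDZr 1 z x y; rewrite !scale1r. Qed.
Lemma muNl x z : mu (- x) z = - mu x z.
Proof. by rewrite -scaleN1r muZl scaleN1r. Qed.
Lemma muNr x z : mu z (- x) = - mu z x.
Proof. by rewrite -scaleN1r muZr scaleN1r. Qed.
Lemma mu_anti x y : mu x y = - mu y x.
Proof.
case: Hmu => _ _ H0 _.
have := H0 (x + y); rewrite muDl !muDr !H0 add0r addr0 => /eqP.
by rewrite addr_eq0 => /eqP.
Qed.
Lemma jacobi x y z : mu x (mu y z) + mu y (mu z x) + mu z (mu x y) = 0.
Proof. by case: Hmu. Qed.

Lemma jac2 X Y Z : mu (mu X Y) Z + mu (mu Y Z) X + mu (mu Z X) Y = 0.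
Proof.
rewrite (mu_anti (mu X Y)) (mu_anti (mu Y Z)) (mu_anti (mu Z X)) -!opprD.
by rewrite -addrA addrC jacobi oppr0.
Qed.

Lemma centerP X : X \in center mu <-> forall Y, mu X Y = 0.
Proof.
apply: vspace_ofP => [Y|a u v Hu Hv Y]; first exact: mu0l.
by rewrite muDZl Hu Hv scaler0 addr0.
Qed.

Lemma derivedP X : X \in derived mu <-> forall W : {vspace V},
                 (forall X Y, mu X Y \in W) -> X \in W.
Proof.
apply: vspace_ofP => [W _|a u v Hu Hv W HW]; first exact: mem0v.
by rewrite memvD ?memvZ ?Hu ?Hv.
Qed.

Lemma mu_derived X Y : mu X Y \in derived mu.
Proof. by apply/derivedP => W; apply. Qed.

Lemma derived_sub (W : {vspace V}) : (forall X Y, mu X Y \in W) ->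
  (derived mu <= W)%VS.
Proof. by move=> HW; apply/subvP => X /derivedP; apply. Qed.

Lemma OmegaP T : T \in Omega mu <->
    (forall X, T X \in center mu) /\ (forall X, X \in derived mu -> T X = 0).
Proof.
apply: vspace_ofP => [|a u v [Hu1 Hu2] [Hv1 Hv2]].
  by split=> [X|X _]; rewrite lfunE ?mem0v.
split=> [X|X HX]; rewrite add_lfunE scale_lfunE.
  by rewrite memvD ?memvZ.
by rewrite Hu2 // Hv2 // scaler0 addr0.
Qed.

Lemma Dt10P t D : D \in Dt10 mu t <-> forall X Y, t *: D (mu X Y) = mu (D X) Y.
Proof.
apply: vspace_ofP => [X Y|a u v Hu Hv X Y].
  by rewrite !lfunE /= scaler0 mu0l.
by rewrite !add_lfunE !scale_lfunE muDZl scalerDr -Hu -Hv scalerA mulrC -scalerA.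
Qed.


Lemma key t (D : 'End(V)) : t != 0 -> t != 1 ->
  (forall X Y, t *: D (mu X Y) = mu (D X) Y) ->
  forall X Y Z, mu (mu (D X) Y) Z = 0.
Proof.
move=> t0 t1 HD.
have DN : forall x, D (- x) = - D x by move=> x; rewrite linearN.
have sym : forall X Y, mu (D X) Y = mu X (D Y).
  by move=> X Y; rewrite (mu_anti X (D Y)) -[mu (D Y) X]HD (mu_anti Y X) DN scalerN opprK HD.
pose f X Y Z := mu (mu (D X) Y) Z.
have fE : forall X Y Z, f X Y Z = (t * t) *: D (mu (mu X Y) Z).
  move=> X Y Z; rewrite /f -HD muZl -HD scalerA //.
have cyc : forall X Y Z, f X Y Z + f Y Z X + f Z X Y = 0.
  move=> X Y Z; rewrite !fE -!scalerDr -!linearD /=.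
  rewrite jac2.
  by rewrite linear0 scaler0.
have j2 : forall X Y Z, f Y Z X + t *: f Z X Y + t *: f X Y Z = 0.
  move=> X Y Z; have := jacobi (D X) Y Z.
  have e1 : t *: mu (D X) (mu Y Z) = - f Y Z X.
    rewrite -HD fE scalerA (mu_anti X) DN scalerN; by [].
  have e2 : mu Y (mu Z (D X)) = - f Z X Y.
    by rewrite /f -sym mu_anti.
  have e3 : mu Z (mu (D X) Y) = - f X Y Z.
    by rewrite /f mu_anti.
  move=> /(congr1 (fun v => t *: v)); rewrite scaler0 !scalerDr e1 e2 e3.
  rewrite !scalerN -!opprD => /eqP; rewrite oppr_eq0 => /eqP.
  by [].
move=> A B C.
have H1 : (1 - t) *: f A B C = 0.
  have E1 := j2 C A B; have E2 := cyc C A B.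
  move: E2; rewrite addrAC addrC => /eqP; rewrite addr_eq0 => /eqP Ha.
  rewrite scalerBl scale1r {2}Ha scalerN opprK scalerDr (addrC (t *: f C A B)).
  by rewrite addrA.
move: H1 => /eqP; rewrite scaler_eq0 subr_eq0 eq_sym (negbTE t1) /= => /eqP.
by [].
Qed.


Lemma Dt10_sub t (D : 'End(V)) : t != 0 -> t != 1 -> D \in Dt10 mu t ->
  forall X, X \in derived mu -> D X \in (center mu :&: derived mu)%VS.
Proof.
move=> t0 t1 /Dt10P HD X.
suff : (derived mu <= D @^-1: (center mu :&: derived mu))%VS.
  by move=> /subvP H /H; rewrite -memv_preim.
apply: derived_sub => A B; rewrite -memv_preim memv_cap.
have -> : D (mu A B) = t^-1 *: mu (D A) B by rewrite -HD scalerA mulVf // scale1r.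
apply/andP; split; last by apply: memvZ; exact: mu_derived.
apply/centerP => Y; rewrite muZl (@key t D t0 t1 HD) scaler0 //.
Qed.

Definition res (f : 'End(V)) :
  'Hom(subvs_of (derived mu), subvs_of (center mu :&: derived mu)%VS) :=
  (linfun (vsproj (center mu :&: derived mu)%VS) \o f \o linfun vsval)%VF.

Lemma resE f u : res f u = vsproj (center mu :&: derived mu)%VS (f (vsval u)).
Proof. by rewrite /res !comp_lfunE !lfunE. Qed.

Fact res_is_linear : linear res.
Proof.
move=> a f g; apply/lfunP => u.
by rewrite add_lfunE scale_lfunE !resE add_lfunE scale_lfunE linearP.
Qed.

HB.instance Definition _ := GRing.isSemilinear.Build K 'End(V) _ _ res
  (GRing.semilinear_linear res_is_linear).

End Lie.
End Aux.

Theorem theorem4p1 (K : fieldType) (V : vectType K) (n : nat)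
    (mu : V -> V -> V) (t : K) :
  [pchar K] =i pred0 ->
  is_lie_bracket mu ->
  \dim (fullv : {vspace V}) = n ->
  derived mu != fullv ->
  t != 0 -> t != 1 ->
  (\dim (Omega mu) <= phi_hat mu t <= \dim (Omega mu) + dimL_derived_center mu)%N.
Proof.
move=> _ Hmu _ _ t0 t1.
have OD : (Omega mu <= Dt10 mu t)%VS.
  apply/subvP => T /(@OmegaP _ _ mu _) [H1 H2]; apply/(@Dt10P _ _ mu Hmu _ _) => X Y.
  rewrite H2 ?(@mu_derived _ _ mu) // scaler0.
  by have /(@centerP _ _ mu Hmu _) -> := H1 X.
apply/andP; split; first exact: dimvS.
rewrite /phi_hat -(limg_ker_dim (linfun (@res _ _ mu)) (Dt10 mu t)).
apply: leq_add; last exact: dimvS (subvf _).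
apply: dimvS; apply/subvP => D; rewrite memv_cap memv_ker => /andP [HD /eqP Hr].
rewrite lfunE /= in Hr.
have H2 : forall X, X \in derived mu -> D X = 0.
  move=> X HX.
  rewrite -(vsprojK (@Dt10_sub _ _ mu Hmu _ _ t0 t1 HD _ HX)).
  rewrite -{1}(vsprojK HX) -(@resE _ _ mu D) Hr zero_lfunE linear0 //.
apply (proj2 (@OmegaP _ _ mu D)); split=> // X.
apply/(@centerP _ _ mu Hmu _) => Y.
by have /(@Dt10P _ _ mu Hmu _ _) <- := HD; rewrite H2 ?(@mu_derived _ _ mu) // scaler0.
Qed.
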